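(* For every integer $1\le m\le D/4$, the Markov chain on $\Sigma_m$ induced by the local automaton gate set $\mathcal G$ is aperiodic: for any $S,S'\in\Sigma_m$ there exists $\ell_{\min}$ such that for every $\ell\ge\ell_{\min}$ there is a sequence of $\ell$ gates $u_1,\dots,u_\ell\in\mathcal G$ with $u_\ell\circ\cdots\circ u_1(S)=S'$.
   Context: Consider $N\ge3$ qubits on a ring (site indices modulo $N$), bitstrings $\mathbf z\in\{0,1\}^N$, $D=2^N$. The gate set is $\mathcal G=\{u_{iab}: i\in\{1,\dots,N\},\ a,b\in\{0,1\}\}$, where $u_{iab}$ is the permutation of $\{0,1\}^N$ that flips bit $i$ if and only if bit $i-1$ equals $a$ and bit $i+1$ equals $b$. $\Sigma_m$ is the set of subsets of $\{0,1\}^N$ of cardinality $m$, with $u(S)=\{u(\mathbf z):\mathbf z\in S\}$. The induced Markov chain has transition matrix $\Gamma_{S,S'}=\frac{1}{|\mathcal G|}\sum_{u\in\mathcal G}\delta_{S',u(S)}$. *)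

(* Defs.v *)
From mathcomp Require Import all_boot.
Set Implicit Arguments. Unset Strict Implicit. Unset Printing Implicit Defensive.

(* Bitstrings z in {0,1}^N, sites 'I_N (i.e. 0..N-1, a relabelling of 1..N), on a ring. *)
Definition bitstring (N : nat) := {ffun 'I_N -> bool}.

Definition gate_label (N : nat) := ('I_N * bool * bool)%type.

Definition gate (N : nat) (g : gate_label N) (z : bitstring N) : bitstring N :=
  let: (i, a, b) := g in
  if (z (ord_pred i) == a) && (z (ordS i) == b)
  then [ffun j => if j == i then ~~ z j else z j]
  else z.

(* u_l o ... o u_1 for gs = [:: u_1; ...; u_l] (u_1 applied first). *)
Definition compose_gates (N : nat) (gs : seq (gate_label N)) (z : bitstring N)
  : bitstring N :=
  foldl (fun z g => gate g z) z gs.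

Definition apply_gates (N : nat) (gs : seq (gate_label N)) (S : {set bitstring N})
  : {set bitstring N} :=
  [set compose_gates gs z | z in S].

(* Main.v *)
Require Import Defs.
From mathcomp Require Import all_boot zify.
Set Implicit Arguments. Unset Strict Implicit. Unset Printing Implicit Defensive.

Lemma modn2 a N : a < 2 * N -> a %% N = if a < N then a else a - N.
Proof.
move=> h; case: ltnP => h2; first by rewrite modn_small.
rewrite -{1}(subnK h2) modnDr modn_small //; lia.
Qed.

Section Main.
Variable N : nat.
Hypothesis hN : 2 < N.
Notation bs := (bitstring N).

Definition flip (i : 'I_N) (w : bs) : bs := [ffun j => if j == i then ~~ w j else w j].
Definition F i (P : bs -> bool) w := if P w then flip i w else w.
Definition realizable (f : bs -> bs) :=
  exists gs : seq (gate_label N), forall w, compose_gates gs w = f w.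
Definition RF i P := realizable (F i P).
Definition indep i (P : bs -> bool) := forall w, P (flip i w) = P w.

Lemma flipK i : involutive (flip i).
Proof. move=> w; apply/ffunP=> l; rewrite !ffunE; case: eqP => // _; exact: negbK. Qed.

Lemma flip_at i w : flip i w i = ~~ w i.
Proof. by rewrite ffunE eqxx. Qed.

Lemma flip_ne i j w : j != i -> flip i w j = w j.
Proof. by rewrite ffunE => /negbTE ->. Qed.

Lemma flipC i j w : flip i (flip j w) = flip j (flip i w).
Proof. apply/ffunP=> l; rewrite !ffunE; do 2 case: eqP => //. Qed.

Lemma realizable_id : realizable id.
Proof. by exists [::]. Qed.

Lemma realizable_comp f g : realizable f -> realizable g -> realizable (fun w => g (f w)).
Proof.
move=> [gs1 H1] [gs2 H2]; exists (gs1 ++ gs2) => w.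
by rewrite /compose_gates foldl_cat -/(compose_gates gs1 w) H1 -/(compose_gates gs2 _) H2.
Qed.

Lemma realizable_ext f g : f =1 g -> realizable f -> realizable g.
Proof. by move=> e [gs H]; exists gs => w; rewrite H e. Qed.

Lemma RF_ext i P Q : P =1 Q -> RF i P -> RF i Q.
Proof. by move=> e; apply: realizable_ext => w; rewrite /F e. Qed.

Lemma RF_gate i a b : RF i (fun w => (w (ord_pred i) == a) && (w (ordS i) == b)).
Proof. by exists [:: (i, a, b)]. Qed.

Lemma RF_false i : RF i (fun _ => false).
Proof. exact: realizable_ext realizable_id. Qed.

Lemma RF_xor (i : 'I_N) P Q : indep i P -> indep i Q -> RF i P -> RF i Q ->
  RF i (fun w => P w (+) Q w).
Proof.
move=> hP hQ rP rQ; apply: realizable_ext (realizable_comp rP rQ) => w.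
rewrite /F; case: (P w) => /=; rewrite ?hQ; case: (Q w) => //=; exact: flipK.
Qed.

Lemma RF_conj (i j : 'I_N) P Q : i != j -> indep i P -> indep j P -> indep j Q ->
  RF i P -> RF j Q -> RF j (fun w => P w && (Q w (+) Q (flip i w))).
Proof.
move=> ij hPi hPj hQj rP rQ.
have := realizable_comp (realizable_comp (realizable_comp rQ rP) rQ) rP.
apply: realizable_ext => w; rewrite /F; cbv beta.
have Q1 : Q (flip i (flip j w)) = Q (flip i w) by rewrite flipC hQj.
have e2 : flip j (flip i (flip j w)) = flip i w by rewrite flipC flipK.
have P2 : P (flip i (flip j w)) = P w by rewrite hPi hPj.
case Qw: (Q w); case Pw: (P w); case Qiw: (Q (flip i w));
  do 3 rewrite /= ?Q1 ?e2 ?P2 ?hPi ?hPj ?Qw ?Pw ?Qiw ?hQj ?Qw ?Qiw /= ?flipK //.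
by rewrite flipC flipK.
Qed.


Lemma modn2P a : a < 2 * N -> (a %% N = a /\ a < N) \/ (a %% N = a - N /\ N <= a).
Proof. move=> h; rewrite modn2 //; case: ltnP => h2; [left|right]; by split. Qed.

Ltac m2 a := let e := fresh "e" in
  have [[e ?]|[e ?]] := @modn2P a ltac:(lia); rewrite ?e.

Lemma ordS_val (i : 'I_N) : nat_of_ord (ordS i) = i.+1 %% N. Proof. by []. Qed.
Lemma ord_pred_val (i : 'I_N) : nat_of_ord (ord_pred i) = (i + N).-1 %% N. Proof. by []. Qed.

Lemma ne_val (x y : 'I_N) : nat_of_ord x <> nat_of_ord y -> x != y.
Proof. by move=> h; apply/eqP=> e; apply: h; rewrite e. Qed.

Lemma ordS_ne (i : 'I_N) : ordS i != i.
Proof.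
apply: ne_val; rewrite ordS_val; have := ltn_ord i.
move=> hi; m2 i.+1; lia.
Qed.

Lemma ord_pred_ne (i : 'I_N) : ord_pred i != i.
Proof.
apply: ne_val; rewrite ord_pred_val; have := ltn_ord i.
move=> hi; m2 (i + N).-1; lia.
Qed.

Lemma ordS_pred_ne (i : 'I_N) : ord_pred i != ordS i.
Proof.
apply: ne_val; rewrite ord_pred_val ordS_val; have := ltn_ord i.
move=> hi; m2 (i + N).-1; m2 i.+1; lia.
Qed.

Definition cube (C : {set 'I_N}) (z : bs) (w : bs) := [forall l in C, w l == z l].

Lemma cube_indep (i : 'I_N) (C : {set 'I_N}) (z : bs) : i \notin C -> indep i (cube C z).
Proof.
move=> hi w; apply/forall_inP/forall_inP => H l lC; have := H l lC;
  rewrite flip_ne //; by move: lC; apply: contraTneq => ->.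
Qed.

Lemma cubeU (A B : {set 'I_N}) (z w : bs) : cube (A :|: B) z w = cube A z w && cube B z w.
Proof.
apply/forall_inP/andP => [H|[/forall_inP HA /forall_inP HB] l].
  by split; apply/forall_inP => l lA; apply: H; rewrite inE lA ?orbT.
by rewrite inE => /orP [] ?; [apply: HA | apply: HB].
Qed.

Lemma cube1 (a : 'I_N) (z w : bs) : cube [set a] z w = (w a == z a).
Proof.
apply/forall_inP/idP => [H|H l]; first exact: H (set11 a).
by rewrite inE => /eqP ->.
Qed.

Lemma cube2 (a b : 'I_N) (z w : bs) : cube [set a; b] z w = (w a == z a) && (w b == z b).
Proof. by rewrite cubeU !cube1. Qed.

Lemma cube_d (i : 'I_N) (B : {set 'I_N}) (z w : bs) : i \in B ->
  cube B z w (+) cube B z (flip i w) = cube (B :\ i) z w.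
Proof.
move=> iB; rewrite -{1 2}(setD1K iB) !cubeU !cube1 flip_at.
rewrite (cube_indep (i := i)) ?in_setD1 ?eqxx //.
by case: (w i); case: (z i); case: (cube (B :\ i) z w).
Qed.

Definition Good (z : bs) (j : 'I_N) (C : {set 'I_N}) := RF j (cube C z).

Lemma rule (z : bs) (i j : 'I_N) (A B : {set 'I_N}) : i != j -> i \notin A -> j \notin A -> i \in B ->
  j \notin B -> Good z i A -> Good z j B -> Good z j (A :|: (B :\ i)).
Proof.
move=> ij iA jA iB jB gA gB.
apply: RF_ext (RF_conj ij (cube_indep z iA) (cube_indep z jA) (cube_indep z jB) gA gB) => w.
by rewrite cube_d // cubeU.
Qed.

Lemma Good_s z (i : 'I_N) : Good z i [set ordS i].
Proof.
have hp := ord_pred_ne i; have hs := ordS_ne i.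
have ind : forall a b, indep i (fun w => (w (ord_pred i) == a) && (w (ordS i) == b)).
  by move=> a b w; rewrite !flip_ne.
apply: RF_ext (RF_xor (ind false (z (ordS i))) (ind true (z (ordS i)))
  (RF_gate i false (z (ordS i))) (RF_gate i true (z (ordS i)))) => w.
by rewrite cube1; case: (w (ord_pred i)); case: (w (ordS i) == z (ordS i)).
Qed.

Lemma Good_ps z (i : 'I_N) : Good z i [set ord_pred i; ordS i].
Proof. by apply: RF_ext (RF_gate i (z (ord_pred i)) (z (ordS i))) => w; rewrite cube2. Qed.

Lemma L1aux z (j : 'I_N) d : 0 < d < N -> forall a : 'I_N, nat_of_ord a = (j + d) %% N ->
  Good z j [set a].
Proof.
have hj := ltn_ord j.
elim: d => [//|d IH] hd a ha.
case: (posnP d) => [d0|dpos].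
  have -> : a = ordS j by apply: ord_inj; rewrite ha ordS_val d0 addn1.
  exact: Good_s.
have N0 : 0 < N by lia.
pose k : 'I_N := Ordinal (ltn_pmod (j + d) N0).
have hk : nat_of_ord k = (j + d) %% N by [].
have gk := IH (ltac:(lia)) k hk.
have ka : ordS k = a.
  by apply: ord_inj; rewrite ordS_val ha hk addnS -[((j + d) %% N).+1]addn1 modnDml addn1.
have gka : Good z k [set a] by rewrite -ka; exact: Good_s.
have := rule (i := k) (j := j) (A := [set a]) (B := [set k]) (z := z) _ _ _ _ _ gka gk.
rewrite setDv setU0; apply; rewrite ?inE ?eqxx //.
all: by apply: ne_val; rewrite ?hk ?ha; m2 (j + d); m2 (j + d.+1); lia.
Qed.

Lemma L1 z (j a : 'I_N) : a != j -> Good z j [set a].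
Proof.
move=> aj; have hj := ltn_ord j; have ha := ltn_ord a.
have aj' : nat_of_ord a <> nat_of_ord j by move=> e; move/eqP: aj; apply; apply: ord_inj.
case: (ltnP j a) => h.
  apply: (@L1aux z j (a - j)); first lia.
  by rewrite subnKC ?modn_small // ltnW.
apply: (@L1aux z j (a + N - j)); first lia.
have -> : j + (a + N - j) = a + N by lia.
by rewrite modnDr modn_small.
Qed.

Lemma L2 z (j b : 'I_N) : b != j -> Good z j [set ord_pred j; b].
Proof.
move=> bj.
case: (eqVneq b (ordS j)) => [->|bs]; first exact: Good_ps.
case: (eqVneq b (ord_pred j)) => [->|bp]; first by rewrite setUid; exact: L1 (ord_pred_ne j).
have := rule (i := ordS j) (j := j) (A := [set b]) (B := [set ord_pred j; ordS j]) (z := z)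
  (ordS_ne j) _ _ _ _ (L1 z bs) (Good_ps z j).
have -> : [set b] :|: ([set ord_pred j; ordS j] :\ ordS j) = [set ord_pred j; b].
  apply/setP => x; rewrite !inE.
  case: (eqVneq x (ordS j)) => [->|xs] /=.
    by rewrite !(eq_sym (ordS j)) (negbTE bs) (negbTE (ordS_pred_ne j)).
  by rewrite orbF orbC.
apply; rewrite ?inE ?eqxx ?orbT //.
- by rewrite eq_sym.
- by rewrite eq_sym.
- by rewrite !(eq_sym j) (negbTE (ord_pred_ne j)) (negbTE (ordS_ne j)).
Qed.

Lemma L3 z (j a b : 'I_N) : a != j -> b != j -> Good z j [set a; b].
Proof.
move=> aj bj.
case: (eqVneq a (ord_pred j)) => [->|ap]; first exact: L2.
case: (eqVneq b (ord_pred j)) => [->|bp]; first by rewrite setUC; exact: L2.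
have := rule (i := ord_pred j) (j := j) (A := [set a]) (B := [set ord_pred j; b]) (z := z)
  (ord_pred_ne j) _ _ _ _ (L1 z ap) (L2 z bj).
have -> : [set a] :|: ([set ord_pred j; b] :\ ord_pred j) = [set a; b].
  apply/setP => x; rewrite !inE.
  case: (eqVneq x (ord_pred j)) => [->|xs] /=.
    by rewrite !(eq_sym (ord_pred j)) (negbTE ap) (negbTE bp).
  by [].
apply; rewrite ?inE ?eqxx ?orbT //.
- by rewrite eq_sym.
- by rewrite eq_sym.
- by rewrite !(eq_sym j) (negbTE (ord_pred_ne j)) (negbTE bj).
Qed.

Lemma L4 z n : forall (j : 'I_N) (C : {set 'I_N}), #|C| <= n.+1 -> j \notin C ->
  (exists2 k : 'I_N, k != j & k \notin C) -> C != set0 -> Good z j C.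
Proof.
elim: n => [|n IH] j C hC jC [k kj kC] C0; case: (leqP #|C| 1) => h1.
- have : #|C| == 1 by rewrite eqn_leq h1 card_gt0.
  case/cards1P => a eC; subst C; apply: L1; by move: jC; rewrite inE eq_sym.
- lia.
- have : #|C| == 1 by rewrite eqn_leq h1 card_gt0.
  case/cards1P => a eC; subst C; apply: L1; by move: jC; rewrite inE eq_sym.
have [c cC] := set0Pn _ C0.
have hc := cardsD1 c C; rewrite cC /= in hc; move: hc; rewrite add1n => hc.
have cj : c != j by apply: contraNneq jC => <-.
have ck : c != k by apply: contraNneq kC => <-.
have gk : Good z k (C :\ c).
  apply: IH; first by rewrite -ltnS -hc.
  - by rewrite inE (negbTE kC) andbF.
  - by exists j; rewrite 1?eq_sym // inE (negbTE jC) andbF.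
  - by rewrite -card_gt0 -ltnS -hc.
have gj := L3 z kj cj.
have := rule (i := k) (j := j) (A := C :\ c) (B := [set k; c]) (z := z) kj _ _ _ _ gk gj.
have -> : (C :\ c) :|: ([set k; c] :\ k) = C.
  apply/setP => x; rewrite !inE.
  case: (eqVneq x c) => [->|xc] /=; first by rewrite cC ck orbT.
  by rewrite orbF andNb orbF.
apply; rewrite ?inE ?eqxx ?(negbTE kC) ?(negbTE jC) ?andbF //.
by rewrite !(eq_sym j) (negbTE kj) (negbTE cj).
Qed.

Lemma Good_full z (j k : 'I_N) : k != j -> Good z j (~: [set j; k]).
Proof.
move=> kj; have hk := cardsC [set j; k]; rewrite cards2 card_ord in hk.
apply: (@L4 z N); rewrite ?inE ?eqxx //.
- by rewrite cardsCs card_ord; lia.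
- by exists k; rewrite // !inE ?eqxx ?orbT.
- rewrite -card_gt0 -(ltn_add2l 2) addn0; move: hk; rewrite eq_sym kj => /= ->; exact: hN.
Qed.

Definition Px (j : 'I_N) (x : bs) := cube (~: [set j]) x.

Lemma cube_ext (C : {set 'I_N}) (x y w : bs) :
  (forall l, l \in C -> x l = y l) -> cube C x w = cube C y w.
Proof.
move=> h; apply/forall_inP/forall_inP => H l lC; have := H l lC; by rewrite h.
Qed.

Lemma indep_xor (i : 'I_N) P Q : indep i P -> indep i Q -> indep i (fun w => P w (+) Q w).
Proof. by move=> hP hQ w; rewrite hP hQ. Qed.

Lemma Px_indep j x : indep j (Px j x).
Proof. by apply: cube_indep; rewrite !inE eqxx. Qed.

Lemma Px_split (j k : 'I_N) x w : k != j ->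
  Px j x w = cube (~: [set j; k]) x w && (w k == x k).
Proof.
move=> kj; rewrite /Px -cube1 -cubeU; congr cube.
apply/setP => l; rewrite !inE; case: (eqVneq l k) => [->|lk] /=.
  by rewrite kj orbT.
by rewrite !orbF.
Qed.

Lemma Px_xor (j k : 'I_N) x w : k != j ->
  Px j x w (+) Px j (flip k x) w = cube (~: [set j; k]) x w.
Proof.
move=> kj; rewrite !(Px_split _ _ kj) flip_at.
rewrite (@cube_ext _ (flip k x) x); last first.
  by move=> l; rewrite !inE negb_or => /andP [_ lk]; rewrite flip_ne.
by case: (cube _ x w); case: (w k); case: (x k).
Qed.

Lemma RF_Px2 (j : 'I_N) n : forall x u : bs,
  #|[set l | (l != j) && (x l != u l)]| <= n -> RF j (fun w => Px j x w (+) Px j u w).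
Proof.
elim: n => [|n IH] x u hn.
  have e0 : [set l | (l != j) && (x l != u l)] = set0.
    by apply: cards0_eq; move: hn; rewrite leqn0 => /eqP.
  apply: RF_ext (RF_false j) => w.
  rewrite /Px (@cube_ext _ x u) ?addbb // => l; rewrite !inE => lj.
  apply/eqP; apply: contraT => xu.
  by have := in_set0 l; rewrite -e0 inE lj xu.
case: (leqP #|[set l | (l != j) && (x l != u l)]| n) => hl; first exact: IH.
have /set0Pn [k] : [set l | (l != j) && (x l != u l)] != set0.
  by rewrite -card_gt0; exact: leq_ltn_trans (leq0n n) hl.
rewrite inE => /andP [kj xk].
have IH' : RF j (fun w => Px j (flip k x) w (+) Px j u w).
  apply: IH.
  have sub : [set l | (l != j) && (flip k x l != u l)] \subset
             [set l | (l != j) && (x l != u l)] :\ k.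
    apply/subsetP => l; rewrite !inE => /andP [lj].
    case: (eqVneq l k) => [->|lk]; rewrite ?flip_at ?flip_ne //=.
      by move: xk; case: (x k); case: (u k).
    by rewrite lj.
  have hd := cardsD1 k [set l | (l != j) && (x l != u l)].
  rewrite inE kj xk /= add1n in hd.
  by apply: leq_trans (subset_leq_card sub) _; rewrite -ltnS -hd.
have G1 : RF j (fun w => Px j x w (+) Px j (flip k x) w).
  by apply: RF_ext (Good_full x kj) => w; rewrite Px_xor.
apply: RF_ext (RF_xor (indep_xor (Px_indep _ _) (Px_indep _ _))
                      (indep_xor (Px_indep _ _) (Px_indep _ _)) G1 IH') => w.
by case: (Px j x w); case: (Px j (flip k x) w); case: (Px j u w).
Qed.

Definition Reach (S T : {set bs}) := exists gs : seq (gate_label N), apply_gates gs S = T.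

Lemma apply_cat gs1 gs2 (S : {set bs}) :
  apply_gates (gs1 ++ gs2) S = apply_gates gs2 (apply_gates gs1 S).
Proof.
rewrite /apply_gates -imset_comp; apply: eq_imset => z.
by rewrite /compose_gates foldl_cat.
Qed.

Lemma reach_refl S : Reach S S.
Proof. by exists [::]; rewrite /apply_gates /compose_gates /= imset_id. Qed.

Lemma reach_trans S T U : Reach S T -> Reach T U -> Reach S U.
Proof. by move=> [g1 <-] [g2 <-]; exists (g1 ++ g2); rewrite apply_cat. Qed.

Lemma reach_real f S : realizable f -> Reach S (f @: S).
Proof. by move=> [gs H]; exists gs; apply: eq_imset. Qed.

Lemma inv_imset (f : bs -> bs) (S : {set bs}) : involutive f -> f @: S = [set w | f w \in S].
Proof.
move=> fK; apply/setP => w; rewrite inE; apply/imsetP/idP => [[y yS ->]|wS].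
  by rewrite fK.
by exists (f w); rewrite ?fK.
Qed.

Definition tau (x y w : bs) : bs := if w == x then y else if w == y then x else w.

Ltac tsolve := rewrite ?eqxx /=;
  repeat (match goal with |- context [?a == ?b] => is_var a; is_var b;
     case: (eqVneq a b) => [?|?]; subst; rewrite ?eqxx /= end);
  try done;
  try (match goal with H : is_true (?a != ?a) |- _ => by rewrite eqxx in H end).

Lemma tauK x y : involutive (tau x y).
Proof. move=> w; rewrite /tau; tsolve. Qed.

Lemma tau_conj x y v w : x != y -> v != x -> v != y ->
  tau x v (tau v y (tau x v w)) = tau x y w.
Proof. move=> xy vx vy; rewrite /tau; tsolve. Qed.

Lemma flip_neq (j : 'I_N) x : flip j x != x.
Proof. by apply/eqP => /ffunP /(_ j); rewrite flip_at; case: (x j). Qed.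

Lemma Px_eq (j : 'I_N) x w : Px j x w = (w == x) || (w == flip j x).
Proof.
apply/forall_inP/idP => [H|].
  case: (eqVneq (w j) (x j)) => e.
    apply/orP; left; apply/eqP/ffunP => l.
    case: (eqVneq l j) => [->|lj] //; apply/eqP; apply: H; by rewrite !inE.
  apply/orP; right; apply/eqP/ffunP => l.
  case: (eqVneq l j) => [->|lj]; last by rewrite flip_ne //; apply/eqP; apply: H; rewrite !inE.
  by rewrite flip_at; move: e; case: (w j); case: (x j).
by case/orP => /eqP -> l; rewrite !inE => lj; rewrite ?flip_ne.
Qed.

Lemma Px_trans (j : 'I_N) x u w : Px j x w -> Px j u w -> Px j x u.
Proof.
move=> /forall_inP h1 /forall_inP h2; apply/forall_inP => l lj.
by rewrite -(eqP (h2 l lj)) (eqP (h1 l lj)).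
Qed.

Lemma F_Px (j : 'I_N) x : F j (Px j x) =1 tau x (flip j x).
Proof.
move=> w; rewrite /F Px_eq /tau.
case: (eqVneq w x) => [->|wx] /=; first by [].
case: (eqVneq w (flip j x)) => [->|wy] /=; first by rewrite flipK.
by [].
Qed.

Lemma F_inv (j : 'I_N) P : indep j P -> involutive (F j P).
Proof. by move=> hP w; rewrite /F; case Pw: (P w); rewrite ?hP Pw ?flipK. Qed.

Lemma card_bs : #|bs| = 2 ^ N.
Proof. by rewrite card_ffun card_bool card_ord. Qed.

Lemma big_D : 8 <= 2 ^ N.
Proof. by have := @leq_exp2l 2 3 N isT; rewrite hN. Qed.

Lemma edge_swap (S : {set bs}) (j : 'I_N) x : 4 * #|S| <= 2 ^ N ->
  Reach S (tau x (flip j x) @: S).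
Proof.
move=> hS.
case: (pickP (fun u => ~~ Px j x u && ((u \in S) == (flip j u \in S)))) => [u /andP [pu /eqP bu] | H].
  have R := reach_real S (RF_Px2 (leqnn #|[set l | (l != j) && (x l != u l)]|)).
  suff -> : tau x (flip j x) @: S =
     F j (fun w => Px j x w (+) Px j u w) @: S by [].
  rewrite (inv_imset _ (tauK _ _)) (inv_imset _ (F_inv (indep_xor (Px_indep j x) (Px_indep j u)))).
  apply/setP => w; rewrite !inE -F_Px /F.
  case Pxw: (Px j x w) => /=.
    case Puw: (Px j u w) => //.
    by move: pu; rewrite (Px_trans Pxw Puw).
  case Puw: (Px j u w) => //.
  move: Puw; rewrite Px_eq => /orP [] /eqP ->; first by rewrite bu.
  by rewrite flipK bu.
exfalso.
have sub : ~: [set x; flip j x] \subset S :|: (flip j @: S).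
  apply/subsetP => w; rewrite !inE negb_or => /andP [wx wfx].
  have := H w; rewrite Px_eq (negbTE wx) (negbTE wfx) /=.
  case wS: (w \in S) => //=; case fS: (flip j w \in S) => // _.
  by apply/imsetP; exists (flip j w); rewrite ?flipK.
have c1 := subset_leq_card sub.
have c2 := cardsU S (flip j @: S).
have c3 := leq_imset_card (flip j) S.
have c4 := cardsC [set x; flip j x].
have c5 := cards2 x (flip j x).
have c6 := big_D.
rewrite card_bs in c4.
move: c1 c2 c3 c4 c5 c6 hS.
move: #|~: [set x; flip j x]| #|S :|: flip j @: S| #|flip j @: S| #|[set x; flip j x]|
  #|S :&: flip j @: S| #|S| (2 ^ N) (x != flip j x) => a b c d e f g h.
case: h => /=; lia.
Qed.

Lemma card_tau x y (S : {set bs}) : #|tau x y @: S| = #|S|.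
Proof. by apply: card_imset; apply: can_inj (tauK x y). Qed.

Lemma swap_any n : forall (S : {set bs}) (x y : bs), #|[set l | x l != y l]| <= n ->
  4 * #|S| <= 2 ^ N -> Reach S (tau x y @: S).
Proof.
elim: n => [|n IH] S x y hd hS.
  have e0 : [set l | x l != y l] = set0.
    by apply: cards0_eq; move: hd; rewrite leqn0 => /eqP.
  have -> : x = y.
    apply/ffunP => l; apply/eqP; apply: contraT => xy.
    by have := in_set0 l; rewrite -e0 inE xy.
  have -> : tau y y @: S = S.
    rewrite -[RHS]imset_id; apply: eq_imset => w; rewrite /tau; tsolve.
  exact: reach_refl.
case: (leqP #|[set l | x l != y l]| n) => hl; first exact: IH.
have /set0Pn [j] : [set l | x l != y l] != set0.
  by rewrite -card_gt0; exact: leq_ltn_trans (leq0n n) hl.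
rewrite inE => xj.
case: (eqVneq (flip j x) y) => [<-|vy]; first exact: edge_swap.
have xy : x != y by apply: contraNneq xj => ->.
have vx := flip_neq j x.
have R1 := edge_swap (S := S) j x hS.
have hS1 : 4 * #|tau x (flip j x) @: S| <= 2 ^ N by rewrite card_tau.
have R2 := IH (tau x (flip j x) @: S) (flip j x) y.
have hS2 : 4 * #|tau (flip j x) y @: (tau x (flip j x) @: S)| <= 2 ^ N by rewrite !card_tau.
have R3 := edge_swap (S := tau (flip j x) y @: (tau x (flip j x) @: S)) j x hS2.
have e : tau x (flip j x) @: (tau (flip j x) y @: (tau x (flip j x) @: S)) = tau x y @: S.
  by rewrite -!imset_comp; apply: eq_imset => w /=; rewrite tau_conj.
rewrite -e; apply: (reach_trans R1); apply: reach_trans R3.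
apply: R2 hS1.
have sub : [set l | flip j x l != y l] \subset [set l | x l != y l] :\ j.
  apply/subsetP => l; rewrite !inE.
  case: (eqVneq l j) => [->|lj]; rewrite ?flip_at ?flip_ne //=.
  by move: xj; case: (x j); case: (y j).
have hdd := cardsD1 j [set l | x l != y l].
rewrite inE xj /= add1n in hdd.
by apply: leq_trans (subset_leq_card sub) _; rewrite -ltnS -hdd.
Qed.

Lemma reach_all n : forall (S S' : {set bs}), #|S :\: S'| <= n -> #|S| = #|S'| ->
  4 * #|S| <= 2 ^ N -> Reach S S'.
Proof.
elim: n => [|n IH] S S' hd hc hS.
  have : S \subset S'.
    by rewrite -setD_eq0 -cards_eq0 -leqn0.
  move=> sub; have /eqP -> : S == S' by rewrite eqEcard sub hc leqnn.
  exact: reach_refl.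
case: (leqP #|S :\: S'| n) => hl; first exact: IH.
have /set0Pn [x] : S :\: S' != set0.
  by rewrite -card_gt0; exact: leq_ltn_trans (leq0n n) hl.
rewrite inE => /andP [xS' xS].
have /set0Pn [y] : S' :\: S != set0.
  rewrite -card_gt0 cardsD setIC -hc -cardsD.
  by exact: leq_ltn_trans (leq0n n) hl.
rewrite inE => /andP [yS yS'].
have R1 := swap_any (leqnn #|[set l | x l != y l]|) hS.
apply: (reach_trans R1); apply: IH; last first.
- by rewrite card_tau.
- by rewrite card_tau.
have sub : (tau x y @: S) :\: S' \subset (S :\: S') :\ x.
  apply/subsetP => w; rewrite (inv_imset _ (tauK x y)) !inE => /andP [wS' tw].
  have wy : w != y by apply: contraNneq wS' => ->.
  have wx : w != x.
    by apply: contraNneq yS => ex; move: tw; rewrite ex /tau eqxx.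
  move: tw; rewrite /tau (negbTE wx) (negbTE wy) => ->.
  by rewrite wS'.
have hdd := cardsD1 x (S :\: S').
rewrite inE xS xS' /= add1n in hdd.
by apply: leq_trans (subset_leq_card sub) _; rewrite -ltnS -hdd.
Qed.

Lemma exists_sub (A : {set bs}) k : k <= #|A| -> exists B : {set bs}, B \subset A /\ #|B| = k.
Proof.
elim: k => [|k IH] hk; first by exists set0; rewrite sub0set cards0.
have [B [BA cB]] := IH (ltnW hk).
have /set0Pn [x] : A :\: B != set0.
  by rewrite -card_gt0 cardsD (setIidPr BA) cB subn_gt0.
rewrite inE => /andP [xB xA].
exists (x |: B); split; first by rewrite subUset sub1set xA BA.
by rewrite cardsU1 xB cB.
Qed.

Lemma fixed_set m : 4 * m <= 2 ^ N ->
  exists S0 : {set bs}, exists g0 : gate_label N,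
    #|S0| = m /\ apply_gates [:: g0] S0 = S0.
Proof.
move=> hm.
have N0 : 0 < N by apply: ltn_trans hN.
pose i0 : 'I_N := Ordinal N0.
pose p := ord_pred i0; pose s := ordS i0.
have ps : p != s := ordS_pred_ne i0.
have sp : s != p by rewrite eq_sym.
pose U0 := [set w : bs | (w p == false) && (w s == false)].
have sub : [set: bs] \subset U0 :|: (flip p @: U0) :|: (flip s @: U0) :|: (flip s @: (flip p @: U0)).
  apply/subsetP => w _; rewrite !in_setU.
  case hp: (w p); case hs: (w s).
  - have h : w \in flip s @: (flip p @: U0).
      apply/imsetP; exists (flip s w); last by rewrite flipK.
      apply/imsetP; exists (flip p (flip s w)); last by rewrite flipK.
      by rewrite inE flip_at flip_ne // flip_ne // flip_at hp hs.
    by rewrite h !orbT.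
  - have h : w \in flip p @: U0.
      apply/imsetP; exists (flip p w); last by rewrite flipK.
      by rewrite inE flip_at flip_ne // hp hs.
    by rewrite h !orbT.
  - have h : w \in flip s @: U0.
      apply/imsetP; exists (flip s w); last by rewrite flipK.
      by rewrite inE flip_at flip_ne // hp hs.
    by rewrite h !orbT.
  - have h : w \in U0 by rewrite inE hp hs.
    by rewrite h.
have c1 := subset_leq_card sub.
rewrite cardsT card_bs in c1.
have c2 := leq_imset_card (flip p) U0.
have c3 := leq_imset_card (flip s) U0.
have c4 := leq_imset_card (flip s) (flip p @: U0).
have c5 := cardsU (U0 :|: flip p @: U0 :|: flip s @: U0) (flip s @: (flip p @: U0)).
have c6 := cardsU (U0 :|: flip p @: U0) (flip s @: U0).
have c7 := cardsU U0 (flip p @: U0).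
have hU : m <= #|U0|.
  move: c1 c2 c3 c4 c5 c6 c7 hm.
  move: #|U0 :|: flip p @: U0 :|: flip s @: U0 :|: flip s @: (flip p @: U0)|
    #|U0 :|: flip p @: U0 :|: flip s @: U0| #|U0 :|: flip p @: U0|
    #|flip s @: (flip p @: U0)| #|flip s @: U0| #|flip p @: U0| #|U0|
    #|(U0 :|: flip p @: U0 :|: flip s @: U0) :&: flip s @: (flip p @: U0)|
    #|(U0 :|: flip p @: U0) :&: flip s @: U0| #|U0 :&: flip p @: U0| (2 ^ N).
  move=> a b c d e f g h i j k; lia.
have [S0 [S0U cS0]] := exists_sub hU.
exists S0, (i0, true, true); split => //.
rewrite /apply_gates /compose_gates /= -[RHS]imset_id; apply: eq_in_imset => w wS0.
have := subsetP S0U w wS0; rewrite inE => /andP [/eqP wp _].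
by rewrite /gate -/p wp.
Qed.

End Main.

Theorem lemma4 (N : nat) (hN : 3 <= N) (m : nat) (hm1 : 1 <= m) (hm2 : 4 * m <= 2 ^ N)
  (S S' : {set bitstring N}) (hS : #|S| = m) (hS' : #|S'| = m) :
  exists lmin : nat, forall l : nat, lmin <= l ->
    exists gs : seq (gate_label N), size gs = l /\ apply_gates gs S = S'.
Proof.
have [S0 [g0 [c0 f0]]] := @fixed_set N hN m hm2.
have hmS : 4 * #|S| <= 2 ^ N by rewrite hS.
have hmS0 : 4 * #|S0| <= 2 ^ N by rewrite c0.
have [gs1 e1] := @reach_all N hN _ S S0 (leqnn _) (etrans hS (esym c0)) hmS.
have [gs2 e2] := @reach_all N hN _ S0 S' (leqnn _) (etrans c0 (esym hS')) hmS0.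
exists (size gs1 + size gs2) => l hl.
exists (gs1 ++ nseq (l - (size gs1 + size gs2)) g0 ++ gs2); split.
  rewrite !size_cat size_nseq; lia.
have fixn : forall n, apply_gates (nseq n g0) S0 = S0.
  elim => [|n IH]; first by rewrite /apply_gates /compose_gates /= imset_id.
  by rewrite (_ : nseq n.+1 g0 = [:: g0] ++ nseq n g0) // apply_cat f0 IH.
by rewrite !apply_cat e1 fixn e2.
Qed.
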